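(* Let $\underline x=(x_1,\dots,x_m)$, $\underline y=(y_1,\dots,y_m)$ and consider an $L_{K,\theta}$-formula $$\bigwedge_{k=1}^m\zeta_k[\theta](x_k)=\sum_{l=1}^{k-1}Q_{k,l}[\theta](x_l)+y_k$$ with each $\zeta_k\in K[X]$ monic of positive degree and $\deg(Q_{k,l})<\deg(\zeta_l)$ for all $l<k$. Then there are (a) an $L_{K,\theta}$-formula $\bigwedge_{k=1}^n\xi_k[\theta](x'_k)=\mu_k(\underline y)$ in $\underline x'=(x'_1,\dots,x'_n)$ and $\underline y$, with each $\xi_k$ monic of positive degree and each $\mu_k(\underline y)$ an $L_{K,\theta}$-term, and (b) $L_{K,\theta}$-terms $\tau^i_k(\underline x';\underline y)$ ($1\le k\le m$, $i\in\omega$) such that (1) the terms $(\tau^i_k(\underline x';\underline 0):1\le k\le m,\ i<\deg(\zeta_k))$ are linearly independent (as formal $K$-linear combinations of the terms $\theta^j(x'_l)$); (2) for $i\ge\deg(\xi_k)$, $\theta^i(x'_k)$ does not occur in any $\tau^j_l(\underline x';\underline y)$ with $j<\deg(\zeta_l)$; such that in $T_{K\text{-vs},\theta}$: (i) $\bigwedge_{k=1}^m\zeta_k[\theta](x_k)=\sum_{l<k}Q_{k,l}[\theta](x_l)+y_k$ is equivalent to $\exists\underline x':\bigwedge_{k=1}^n\xi_k[\theta](x'_k)=\mu_k(\underline y)\wedge\bigwedge_{k=1}^mx_k=\tau^0_k(\underline x';\underline y)$; (ii) $\bigwedge_{k=1}^n\xi_k[\theta](x'_k)=\mu_k(\underline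 y)$ implies $\tau^i_k(\underline x';\underline y)=\theta^i(\tau^0_k(\underline x';\underline y))$ for all $k\in\{1,\dots,m\}$, $i\in\omega$. Variation 1: if $C$ is a kernel configuration and all irreducible factors $f$ of all $\zeta_k$ satisfy $C(f)=\infty$, then all irreducible factors of all $\xi_k$ satisfy $C(f)=\infty$. Variation 2: let $C$ be a kernel configuration and $f\in K[X]_{\mathrm{irr}}$ with $0<C(f)<\infty$; suppose $\zeta_k=f^{q_k}$ with $0<q_k\le C(f)$ for all $k$, and that $T_{K\text{-vs},\theta}\models\bigwedge_k f^{q_k}[\theta](x_k)=\sum_{l<k}Q_{k,l}[\theta](x_l)+y_k\to\bigwedge_k f^{C(f)}[\theta](x_k)=t_k(\underline y)$ for some $L_{K,\theta}$-terms $t_k$. Then each $\xi_k=f^{q'_k}$ with $0<q'_k\le C(f)$, and for every $(\mathbb V,\theta)\models T_{K\text{-vs},\theta}$ and tuple $\underline u$ in $\mathrm{Ker}(f^{C(f)}[\theta])$ with $t_k(\underline u)=0$ for all $k$, we have $\mu_k(\underline u)\in\mathrm{Ker}(f^{C(f)-q'_k}[\theta])$ for all $k$.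
   Context: $K$ is a field, $K[X]_{\mathrm{irr}}$ the set of monic irreducible polynomials. $T_{K\text{-vs},\theta}$ is the theory of $K$-vector spaces with a $K$-linear endomorphism $\theta$, in the language $L_{K,\theta}=\{0,+,(q\cdot)_{q\in K},\theta\}$. For $\rho=\sum_i(\rho)_iX^i$, $\rho[\theta]=\sum_i(\rho)_i\theta^i$; $\mathrm{Ker}$ denotes kernel. A kernel configuration is $C=(c,d)$ with $c:K[X]_{\mathrm{irr}}\to\mathbb N\cup\{\infty\}$, $d\in\mathbb N_{>0}\cup\{\infty\}$, $d=\infty$ or $d=\sum_f\deg(f)c(f)$; write $C(f)=c(f)$. Every $L_{K,\theta}$-term in variables $\underline x',\underline y$ is equivalent modulo $T_{K\text{-vs},\theta}$ to one of the form $\sum_l\rho_l[\theta](x'_l)+\sum_l\sigma_l[\theta](y_l)$. *)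

(* Defs.v *)
From HB Require Import structures.
From mathcomp Require Import all_boot all_order all_algebra.
Set Implicit Arguments. Unset Strict Implicit. Unset Printing Implicit Defensive.
Import GRing.Theory.
Local Open Scope ring_scope.

(* A model of T_{K-vs,theta}: a K-vector space V (lmodType K) with a
   K-linear endomorphism theta : {linear V -> V}. *)

Definition peval (K : fieldType) (V : lmodType K) (th : V -> V)
    (p : {poly K}) (v : V) : V :=
  \sum_(i < size p) p`_i *: iter i th v.

(* Normal form of an L_{K,theta}-term in variables y_1..y_m:
   sum_l sigma_l[theta](y_l), represented by sigma : 'I_m -> {poly K}. *)
Definition yterm (K : fieldType) (m : nat) := 'I_m -> {poly K}.

Definition eval_y (K : fieldType) (V : lmodType K) (th : V -> V) (m : nat)
    (s : yterm K m) (y : 'I_m -> V) : V :=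
  \sum_(l < m) peval th (s l) (y l).

(* Normal form of an L_{K,theta}-term in variables x'_1..x'_n, y_1..y_m:
   sum_l rho_l[theta](x'_l) + sum_l sigma_l[theta](y_l), represented by
   (rho, sigma).  The first component is the formal K-linear combination of
   the terms theta^j(x'_l): coefficient of theta^j(x'_l) is (rho l)`_j. *)
Definition xyterm (K : fieldType) (n m : nat) :=
  (('I_n -> {poly K}) * ('I_m -> {poly K}))%type.

Definition eval_xy (K : fieldType) (V : lmodType K) (th : V -> V) (n m : nat)
    (t : xyterm K n m) (x' : 'I_n -> V) (y : 'I_m -> V) : V :=
  \sum_(l < n) peval th (t.1 l) (x' l) + eval_y th t.2 y.

Definition mirr (K : fieldType) (f : {poly K}) : Prop :=
  f \is monic /\ irreducible_poly f.

Definition pdeg (K : fieldType) (p : {poly K}) : nat := (size p).-1.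

(* Kernel configuration C = (c, d); None stands for infinity.
   c : K[X]_irr -> N u {oo} (values outside K[X]_irr are irrelevant),
   d in N_{>0} u {oo}, and d = oo or d = sum_f deg(f) c(f) (a finite sum:
   all c(f) finite and only finitely many nonzero). *)
Record kconf (K : fieldType) := KConf {
  kc_c : {poly K} -> option nat;
  kc_d : option nat }.

Definition kconf_ok (K : fieldType) (C : kconf K) : Prop :=
  match kc_d C with
  | None => True
  | Some d =>
      (0 < d)%N /\
      exists s : seq {poly K},
        [/\ uniq s, (forall f, f \in s -> mirr f),
            (forall f, mirr f -> f \notin s -> kc_c C f = Some 0%N),
            (forall f, f \in s -> exists e, kc_c C f = Some e) &
            d = \sum_(f <- s) (pdeg f * odflt 0%N (kc_c C f))%N]
  end.

(* Main.v *)
Require Import Defs.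
From HB Require Import structures.
From mathcomp Require Import all_boot all_order all_algebra.
From mathcomp Require Import fingroup perm zify.
Import GRing.Theory.
Local Open Scope ring_scope.

(* Proof via diagonalization of polynomial matrices. *)

Module Aux.
Set Implicit Arguments. Unset Strict Implicit. Unset Printing Implicit Defensive.

Section Peval.
Variables (K : fieldType) (V : lmodType K) (th : {linear V -> V}).

Lemma iter_lin i : linear (iter i th).
Proof.
elim: i => [|i IH] a u v /=; first by [].
by rewrite IH linearP.
Qed.

Lemma iter0v i : iter i th 0 = 0.
Proof. by elim: i => //= i ->; rewrite linear0. Qed.

Lemma peval_bound (p : {poly K}) n v : (size p <= n)%N ->
  peval th p v = \sum_(i < n) p`_i *: iter i th v.
Proof.
move=> hn; rewrite /peval (big_ord_widen n (fun i => p`_i *: iter i th v) hn).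
rewrite [RHS](bigID (fun i : 'I_n => (i < size p)%N)) /=.
rewrite [X in _ = _ + X]big1 ?addr0 //.
by move=> i; rewrite -leqNgt => hi; rewrite nth_default // scale0r.
Qed.

Lemma pevalD p q v : peval th (p + q) v = peval th p v + peval th q v.
Proof.
set n := maxn (size p) (size q).
rewrite !(@peval_bound _ n) ?leq_maxl ?leq_maxr //; last first.
  by rewrite (leq_trans (size_polyD _ _)).
by rewrite -big_split /=; apply: eq_bigr => i _; rewrite coefD scalerDl.
Qed.

Lemma pevalZ c p v : peval th (c *: p) v = c *: peval th p v.
Proof.
rewrite !(@peval_bound _ (size p)) ?size_scale_leq // scaler_sumr.
by apply: eq_bigr => i _; rewrite coefZ scalerA.
Qed.

Lemma peval0 v : peval th 0 v = 0.
Proof. by rewrite /peval size_poly0 big_ord0. Qed.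

Lemma pevalN p v : peval th (- p) v = - peval th p v.
Proof. by rewrite -[- p]scaleN1r pevalZ scaleN1r. Qed.

Lemma pevalB p q v : peval th (p - q) v = peval th p v - peval th q v.
Proof. by rewrite pevalD pevalN. Qed.

Lemma peval_sum (I : Type) (r : seq I) (P : pred I) (F : I -> {poly K}) v :
  peval th (\sum_(i <- r | P i) F i) v = \sum_(i <- r | P i) peval th (F i) v.
Proof.
elim/big_rec2: _ => [|i a b _ <-]; first exact: peval0.
by rewrite pevalD.
Qed.

Lemma pevalC c v : peval th c%:P v = c *: v.
Proof.
rewrite (@peval_bound _ 1) ?size_polyC ?leq_b1 // big_ord1 coefC /=.
by [].
Qed.

Lemma peval1 v : peval th 1 v = v.
Proof. by rewrite pevalC scale1r. Qed.

Lemma peval_linear p : linear (peval th p).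
Proof.
move=> a u v; rewrite /peval scaler_sumr -big_split /=.
apply: eq_bigr => i _; rewrite iter_lin scalerDr !scalerA; congr (_ + _).
by rewrite mulrC.
Qed.

Lemma pevalvD p u v : peval th p (u + v) = peval th p u + peval th p v.
Proof. by have := peval_linear p 1 u v; rewrite !scale1r. Qed.

Lemma pevalv0 p : peval th p 0 = 0.
Proof. by rewrite /peval big1 // => i _; rewrite iter0v scaler0. Qed.

Lemma pevalvZ p a v : peval th p (a *: v) = a *: peval th p v.
Proof. by have := peval_linear p a v 0; rewrite !addr0 pevalv0 addr0. Qed.

Lemma pevalvN p v : peval th p (- v) = - peval th p v.
Proof. by rewrite -scaleN1r pevalvZ scaleN1r. Qed.

Lemma pevalv_sum p (I : Type) (r : seq I) (P : pred I) (F : I -> V) :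
  peval th p (\sum_(i <- r | P i) F i) = \sum_(i <- r | P i) peval th p (F i).
Proof.
elim/big_rec2: _ => [|i a b _ <-]; first exact: pevalv0.
by rewrite pevalvD.
Qed.

Lemma peval_th p v : peval th p (th v) = th (peval th p v).
Proof.
rewrite /peval linear_sum; apply: eq_bigr => i _.
by rewrite linearZ /= -iterSr -iterS.
Qed.

Lemma pevalMX p v : peval th (p * 'X) v = peval th p (th v).
Proof.
have [->|p0] := eqVneq p 0; first by rewrite mul0r !peval0.
rewrite /peval size_mulX // big_ord_recl coefMX eqxx scale0r add0r.
by apply: eq_bigr => i _; rewrite coefMX /= -iterSr.
Qed.

Lemma pevalM p q v : peval th (p * q) v = peval th p (peval th q v).
Proof.
elim/poly_ind: p v => [|p c IH] v; first by rewrite mul0r !peval0.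
rewrite mulrDl -mulrA (mulrC 'X) mulrA !pevalD !pevalMX IH peval_th.
by rewrite mul_polyC pevalZ !pevalC.
Qed.

Lemma pevalX v : peval th 'X v = th v.
Proof. by rewrite -['X]mul1r pevalMX peval1. Qed.

Lemma peval_Xn i v : peval th ('X^i) v = iter i th v.
Proof.
elim: i v => [|i IH] v; first by rewrite expr0 peval1.
by rewrite exprSr pevalMX IH iterSr.
Qed.

End Peval.

Section PolyAux.
Variable K : fieldType.
Implicit Types f g h : {poly K}.

Lemma irr_cop_or_dvd f g : irreducible_poly f -> coprimep f g \/ f %| g.
Proof.
move=> irr; have [c|nc] := boolP (coprimep f g); first by left.
right; have hg := dvdp_gcdl f g.
have := irr (gcdp f g); rewrite -coprimep_def => /(_ nc hg) e.
by rewrite -(eqp_dvdl _ e) dvdp_gcdr.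
Qed.

Lemma irr_dvd_mul f g h : irreducible_poly f -> f %| g * h -> f %| g \/ f %| h.
Proof.
move=> irr fgh; have [c|d] := irr_cop_or_dvd g irr; last by left.
by right; rewrite -(Gauss_dvdpr h c).
Qed.

Lemma irr_ndvd_unit f u : irreducible_poly f -> u \is a GRing.unit -> ~~ (f %| u).
Proof.
move=> [sf _] uu; apply/negP => fu.
have u0 : u != 0 by apply/negP => /eqP u0; move: uu; rewrite u0 unitr0.
have := dvdp_leq u0 fu; move: uu; rewrite poly_unitE => /andP [/eqP -> _].
by rewrite leqNgt sf.
Qed.

Lemma irr_dvd_prod f (I : Type) (r : seq I) (F : I -> {poly K}) :
  irreducible_poly f -> f %| \prod_(i <- r) F i -> exists i, f %| F i.
Proof.
move=> irr; elim: r => [|i r IH]; rewrite ?big_nil ?big_cons.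
  by move=> h; have := irr_ndvd_unit irr (unitr1 _); rewrite h.
by case/(irr_dvd_mul irr) => [h|/IH [j h]]; [exists i | exists j].
Qed.

Lemma monic_dvd_pow f g n : irreducible_poly f -> f \is monic -> g \is monic ->
  g %| f ^+ n -> exists2 e, (e <= n)%N & g = f ^+ e.
Proof.
move=> irr mf; elim: n g => [|n IH] g mg.
  rewrite expr0 dvdp1 => s1; exists 0%N => //; rewrite expr0.
  have s1' : (size g <= 1)%N by rewrite (eqP s1).
  have l1 : g`_0 = 1.
    by have := monicP mg; rewrite lead_coefE (eqP s1) => h; exact: h.
  by rewrite (size1_polyC s1') l1.
rewrite exprS; have [c|d] := irr_cop_or_dvd g irr.
  rewrite Gauss_dvdpr; last by rewrite coprimep_sym.
  move=> h.
  by have [e en ->] := IH g mg h; exists e => //; rewrite (leq_trans en).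
rewrite -(divpK d) mulrC => h.
have f0 : f != 0 by apply: irredp_neq0.
have mg' : g %/ f \is monic by rewrite -(monicMr _ mf) divpK.
have h' : g %/ f %| f ^+ n by move: h; rewrite dvdp_mul2l.
have [e en eg] := IH _ mg' h'.
by exists e.+1 => //; rewrite exprS -eg mulrC.
Qed.
End PolyAux.

Section Diag.
Variables (K : fieldType) (m : nat).
Local Notation R := {poly K}.
Local Notation M := 'M[R]_m.

Definition eqv (A B : M) := exists L Rm : M,
  [/\ L \in unitmx, Rm \in unitmx & B = L *m A *m Rm].

Lemma eqv_refl A : eqv A A.
Proof. by exists 1%:M, 1%:M; rewrite unitmx1 mul1mx mulmx1. Qed.

Lemma eqv_trans A B C : eqv A B -> eqv B C -> eqv A C.
Proof.
move=> [L1 [R1 [u1 v1 ->]]] [L2 [R2 [u2 v2 ->]]].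
exists (L2 *m L1), (R1 *m R2); rewrite !unitmx_mul u1 v1 u2 v2; split => //.
by rewrite !mulmxA.
Qed.

Definition clean k (B : M) := forall i j : 'I_m, i != j ->
  ((i < k) || (j < k))%N -> B i j = 0.

Definition Nc (k : 'I_m) (q : 'I_m -> R) : M := \matrix_(t, l) ((t == k)%:R * q l).
Definition Nr (k : 'I_m) (p : 'I_m -> R) : M := \matrix_(i, s) ((s == k)%:R * p i).

Lemma mulmx_Nc (B : M) k q i l : (B *m Nc k q) i l = B i k * q l.
Proof.
rewrite mxE (bigD1 k) //= big1 ?addr0; first by rewrite mxE eqxx mul1r.
by move=> t /negPf tk; rewrite mxE tk mul0r mulr0.
Qed.

Lemma Nr_mulmx (B : M) k p i l : (Nr k p *m B) i l = p i * B k l.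
Proof.
rewrite mxE (bigD1 k) //= big1 ?addr0; first by rewrite mxE eqxx mul1r.
by move=> t /negPf tk; rewrite mxE tk mul0r mul0r.
Qed.

Lemma Nc_unit k q : q k = 0 -> (1%:M - Nc k q) \in unitmx.
Proof.
move=> qk; suff: (1%:M - Nc k q) *m (1%:M + Nc k q) = 1%:M by case/mulmx1_unit.
rewrite mulmxBl mulmxDr !mul1mx mulmxDr mulmx1.
suff ->: Nc k q *m Nc k q = 0 by rewrite addr0 addrK.
apply/matrixP => i l; rewrite mulmx_Nc !mxE.
by rewrite qk mulr0 mul0r.
Qed.

Lemma Nr_unit k p : p k = 0 -> (1%:M - Nr k p) \in unitmx.
Proof.
move=> pk; suff: (1%:M - Nr k p) *m (1%:M + Nr k p) = 1%:M by case/mulmx1_unit.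
rewrite mulmxBl mulmxDr !mul1mx mulmxDr mulmx1.
suff ->: Nr k p *m Nr k p = 0 by rewrite addr0 addrK.
apply/matrixP => i l; rewrite Nr_mulmx !mxE.
by rewrite pk !mulr0.
Qed.

Lemma perm_eqv (B : M) (s1 s2 : 'S_m) : eqv B (row_perm s1 (col_perm s2 B)).
Proof.
exists (perm_mx s1), (perm_mx s2^-1); rewrite !unitmx_perm.
by rewrite row_permE col_permE mulmxA.
Qed.

Lemma step_inner k (hk : (k < m)%N) s : forall (B : M), clean k B ->
  forall i0 j0 : 'I_m, (k <= i0)%N -> (k <= j0)%N -> B i0 j0 != 0 ->
  (size (B i0 j0) < s)%N -> exists B', clean k.+1 B' /\ eqv B B'.
Proof.
elim: s => [//|s IH] B cB i0 j0 ki0 kj0 nz hs.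
pose kk : 'I_m := Ordinal hk.
pose B1 := row_perm (tperm i0 kk) (col_perm (tperm j0 kk) B).
have hB1 : forall i j, B1 i j = B (tperm i0 kk i) (tperm j0 kk j).
  by move=> i j; rewrite !mxE.
have e1 : eqv B B1 by apply: perm_eqv.
have tp : forall (x z : 'I_m), (k <= x)%N -> (z < k)%N -> tperm x kk z = z.
  move=> x z kx zk; apply: tpermD.
    by apply/eqP => ex; move: zk; rewrite -ex ltnNge kx.
  by apply/eqP => ex; move: zk; rewrite -ex ltnn.
have c1 : clean k B1.
  move=> i j ij /orP [ik|jk]; rewrite hB1.
    rewrite (tp i0 i) //; apply: cB; last by rewrite ik.
    apply/eqP => ej; move/eqP: ij; apply.
    by rewrite -(tpermK j0 kk j) -ej tp.
  rewrite (tp j0 j) //; apply: cB; last by rewrite jk orbT.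
  apply/eqP => ej; move/eqP: ij; apply.
  by rewrite -(tpermK i0 kk i) ej tp.
set a := B1 kk kk.
have ha : a = B i0 j0 by rewrite /a hB1 !tpermR.
have a0 : a != 0 by rewrite ha.
pose q l := if l == kk then 0 else B1 kk l %/ a.
pose p i := if i == kk then 0 else B1 i kk %/ a.
have qk : q kk = 0 by rewrite /q eqxx.
have pk : p kk = 0 by rewrite /p eqxx.
pose C := B1 *m (1%:M - Nc kk q).
pose B2 := (1%:M - Nr kk p) *m C.
have e2 : eqv B1 B2.
  exists (1%:M - Nr kk p), (1%:M - Nc kk q); rewrite Nr_unit // Nc_unit //.
  by split => //; rewrite /B2 /C mulmxA.
have hC : forall i l, C i l = B1 i l - B1 i kk * q l.
  by move=> i l; rewrite /C mulmxBr mulmx1 -mulmx_Nc !mxE.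
have hB2 : forall i l, B2 i l = C i l - p i * C kk l.
  by move=> i l; rewrite /B2 mulmxBl mul1mx -Nr_mulmx !mxE.
have B2ik : forall i, i != kk -> B2 i kk = B1 i kk %% a.
  move=> i ik; rewrite hB2 !hC qk !mulr0 !subr0 /p (negPf ik) -/a.
  by rewrite {1}(divp_eq (B1 i kk) a) addrAC subrr add0r.
have B2kl : forall l, l != kk -> B2 kk l = B1 kk l %% a.
  move=> l lk; rewrite hB2 pk mul0r subr0 hC /q (negPf lk) -/a mulrC.
  by rewrite {1}(divp_eq (B1 kk l) a) addrAC subrr add0r.
have c2 : clean k B2.
  move=> i j ij /orP [ik|jk]; rewrite hB2 !hC.
    have ik' : i != kk by apply/eqP => e; move: ik; rewrite e ltnn.
    have h0 : B1 i kk = 0 by apply: c1 => //; rewrite ik.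
    have -> : p i = 0 by rewrite /p (negPf ik') h0 div0p.
    rewrite h0.
    rewrite mul0r subr0 mul0r subr0.
    by apply: c1 => //; rewrite ik.
  have jk' : j != kk by apply/eqP => e; move: jk; rewrite e ltnn.
  have h0 : B1 kk j = 0 by apply: c1; [rewrite eq_sym | rewrite jk orbT].
  have -> : q j = 0 by rewrite /q (negPf jk') h0 div0p.
  rewrite h0.
  rewrite !mulr0 !subr0 mulr0 subr0.
  by apply: c1 => //; rewrite jk orbT.
have sm : forall x, x != kk -> B2 x kk != 0 \/ B2 kk x != 0 ->
    (k <= x)%N -> exists B', clean k.+1 B' /\ eqv B B'.
  move=> x xk hx kx.
  have lt : forall r : {poly K}, (size (r %% a)%R < s)%N.
    move=> r; apply: (leq_trans (ltn_modpN0 r a0)).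
    by rewrite -ltnS ha.
  case: hx => hx.
    have [|B' [cB' e']] := IH B2 c2 x kk kx (leqnn k) hx.
      by rewrite B2ik // lt.
    by exists B'; split => //; apply: (eqv_trans e1 (eqv_trans e2 e')).
  have [|B' [cB' e']] := IH B2 c2 kk x (leqnn k) kx hx.
    by rewrite B2kl // lt.
  by exists B'; split => //; apply: (eqv_trans e1 (eqv_trans e2 e')).
have kx : forall x, x != kk -> B2 x kk != 0 \/ B2 kk x != 0 -> (k <= x)%N.
  move=> x xk; rewrite leqNgt; apply: contraPN => xk'.
  have h1 : B2 x kk = 0 by apply: c2 => //; rewrite xk'.
  have h2 : B2 kk x = 0 by apply: c2; [rewrite eq_sym | rewrite xk' orbT].
  by rewrite h1 h2 eqxx; case.
have [x /andP [xk hx] | nx] := pickP (fun x => (x != kk) && (B2 x kk != 0)).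
  have hx' : B2 x kk != 0 \/ B2 kk x != 0 by left.
  exact: sm x xk hx' (kx x xk hx').
have [x /andP [xk hx] | ny] := pickP (fun x => (x != kk) && (B2 kk x != 0)).
  have hx' : B2 x kk != 0 \/ B2 kk x != 0 by right.
  exact: sm x xk hx' (kx x xk hx').
exists B2; split; last exact: eqv_trans e1 e2.
move=> i j ij; rewrite !ltnS => hij.
have [ik|ik] := boolP (i < k)%N; first by apply: c2; rewrite ?ik.
have [jk|jk] := boolP (j < k)%N; first by apply: c2; rewrite ?jk ?orbT.
case/orP: hij => [ile|jle].
  have ei : i = kk by apply/val_inj; apply/eqP; rewrite eqn_leq ile leqNgt ik.
  subst i; have := ny j; rewrite eq_sym ij /= => /negbFE/eqP; done.
have ej : j = kk by apply/val_inj; apply/eqP; rewrite eqn_leq jle leqNgt jk.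
subst j; have := nx i; rewrite ij /= => /negbFE/eqP; done.
Qed.

Lemma diag_exists (A : M) :
  exists B : M, (forall i j : 'I_m, i != j -> B i j = 0) /\ eqv A B.
Proof.
suff H : forall k, (k <= m)%N -> exists B : M, clean k B /\ eqv A B.
  have [B [cB e]] := H m (leqnn m); exists B; split => // i j ij.
  by apply: cB => //; rewrite ltn_ord.
elim => [_|k IH km].
  by exists A; split; [move=> i j _ | exact: eqv_refl].
have [B [cB e]] := IH (ltnW km).
have [[i j] /and3P [ki kj nz] | none] :=
  pickP (fun ij : 'I_m * 'I_m => [&& (k <= ij.1)%N, (k <= ij.2)%N & B ij.1 ij.2 != 0]).
  have [B' [cB' e']] := step_inner km cB ki kj nz (ltnSn _).
  by exists B'; split => //; apply: eqv_trans e e'.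
exists B; split => // i j ij; rewrite !ltnS => hij.
have [ik|ik] := boolP (i < k)%N; first by apply: cB; rewrite ?ik.
have [jk|jk] := boolP (j < k)%N; first by apply: cB; rewrite ?jk ?orbT.
have := none (i, j); rewrite /= -!leqNgt in ik jk; rewrite ik jk /=.
by move/negbFE/eqP.
Qed.

End Diag.

Section Act.
Variables (K : fieldType) (V : lmodType K) (th : {linear V -> V}) (m : nat).
Local Notation M := 'M[{poly K}]_m.

Definition act (P : M) (x : 'I_m -> V) : 'I_m -> V :=
  fun i => eval_y th (fun j => P i j) x.

Lemma act_ext P x x' : x =1 x' -> act P x =1 act P x'.
Proof. by move=> e i; apply: eq_bigr => j _; rewrite e. Qed.

Lemma act_mul P Q x : act (P *m Q) x =1 act P (act Q x).
Proof.
move=> i; rewrite /act /eval_y.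
under eq_bigr => j _ do rewrite mxE peval_sum.
rewrite exchange_big /=; apply: eq_bigr => t _.
by rewrite pevalv_sum; apply: eq_bigr => j _; rewrite pevalM.
Qed.

Lemma act1 x : act 1%:M x =1 x.
Proof.
move=> i; rewrite /act /eval_y (bigD1 i) //= big1 ?addr0.
  by rewrite mxE eqxx peval1.
by move=> j /negPf ji; rewrite mxE eq_sym ji peval0.
Qed.

Lemma act_diag (D : M) x : (forall i j, i != j -> D i j = 0) ->
  forall i, act D x i = peval th (D i i) (x i).
Proof.
move=> hD i; rewrite /act /eval_y (bigD1 i) //= big1 ?addr0 //.
by move=> j ji; rewrite hD 1?eq_sym // peval0.
Qed.

Lemma act0 P i : act P (fun _ => 0) i = 0.
Proof. by rewrite /act /eval_y big1 // => j _; rewrite pevalv0. Qed.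

End Act.

Section PolyModel.
Variable K : fieldType.

Lemma iter_polyX i (v : {poly K}) : iter i ('X \o* idfun) v = v * 'X^i.
Proof.
elim: i => [|i IH]; first by rewrite expr0 mulr1.
by rewrite iterS IH /= exprSr mulrA.
Qed.

Lemma peval_polyX p (v : {poly K}) : peval ('X \o* idfun) p v = v * p.
Proof.
rewrite /peval; under eq_bigr => i _ do rewrite iter_polyX scalerAr.
by rewrite -mulr_sumr -poly_def coefK.
Qed.
End PolyModel.

Section Main.
Variables (K : fieldType) (m : nat) (zeta : 'I_m -> {poly K})
  (Q : 'I_m -> 'I_m -> {poly K}).
Hypothesis Hzeta : forall k, zeta k \is monic /\ (0 < pdeg (zeta k))%N.
Local Notation M := 'M[{poly K}]_m.

Definition Amx : M := \matrix_(k, l)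
  (if l == k then zeta k else if (l < k)%N then - Q k l else 0).

Lemma sys_act (V : lmodType K) (th : {linear V -> V}) (x y : 'I_m -> V) :
  (forall k : 'I_m, peval th (zeta k) (x k)
      = \sum_(l < m | (l < k)%N) peval th (Q k l) (x l) + y k) <->
  (forall k, act th Amx x k = y k).
Proof.
have e : forall k, act th Amx x k =
    peval th (zeta k) (x k) - \sum_(l < m | (l < k)%N) peval th (Q k l) (x l).
  move=> k; rewrite /act /eval_y (bigD1 k) //= mxE eqxx; congr (_ + _).
  rewrite -sumrN big_mkcond [RHS]big_mkcond /=; apply: eq_bigr => l _; rewrite mxE.
  case: (eqVneq l k) => [->|lk]; first by rewrite ltnn.
  by rewrite /=; case: ifP => _; rewrite ?pevalN ?peval0.
split => h k.
  by rewrite e h addrAC subrr add0r.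

by rewrite -(h k) e addrC subrK.
Qed.

Lemma det_Amx : \det Amx = \prod_k zeta k.
Proof.
rewrite det_trig; first by apply: eq_bigr => k _; rewrite mxE eqxx.
apply/is_trig_mxP => i j ij; rewrite mxE.
by rewrite [j == i]eq_sym -val_eqE /= (ltn_eqF ij) ltnNge (ltnW ij).
Qed.

Lemma prod_zeta_neq0 : \prod_k zeta k != 0.
Proof.
apply/prodf_neq0 => k _; have [mz _] := Hzeta k.
by apply: monic_neq0.
Qed.

Variables (L R D : M).
Hypotheses (uL : L \in unitmx) (uR : R \in unitmx) (hD : D = L *m Amx *m R)
  (Ddiag : forall i j, i != j -> D i j = 0).

Definition d k := D k k.
Definition c k := lead_coef (d k).

Lemma unit_neq0 (u : {poly K}) : u \is a GRing.unit -> u != 0.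
Proof. by apply: contraTneq => ->; rewrite unitr0. Qed.

Lemma prod_d : \prod_k d k = \det L * \prod_k zeta k * \det R.
Proof.
rewrite -det_Amx -!det_mulmx -hD det_trig //; apply/is_trig_mxP => i j ij.
by apply: Ddiag; rewrite -val_eqE /= (ltn_eqF ij).
Qed.

Lemma d_neq0 k : d k != 0.
Proof.
have : \prod_k d k != 0.
  rewrite prod_d !mulf_neq0 ?prod_zeta_neq0 // unit_neq0 // -unitmxE //.
by move/prodf_neq0; apply.
Qed.

Lemma c_neq0 k : c k != 0.
Proof. by rewrite lead_coef_eq0 d_neq0. Qed.

Definition triv k := size (d k) == 1%N.

Lemma dC k : triv k -> d k = (c k)%:P.
Proof.
move=> /eqP s1; have s1' : (size (d k) <= 1)%N by rewrite s1.
by rewrite {1}(size1_polyC s1') /c lead_coefE s1.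
Qed.

Definition xi k := if triv k then zeta k else (c k)^-1 *: d k.

Lemma d_xi k : ~~ triv k -> d k = c k *: xi k.
Proof. by rewrite /xi => /negPf ->; rewrite scalerA mulfV ?c_neq0 // scale1r. Qed.

Lemma xi_ok k : xi k \is monic /\ (0 < pdeg (xi k))%N.
Proof.
rewrite /xi; case: ifP => tk; first exact: Hzeta.
split; first by rewrite monicE lead_coefZ mulVf ?c_neq0.
rewrite /pdeg size_scale ?invr_eq0 ?c_neq0 //.
have := d_neq0 k; rewrite -size_poly_gt0; move: tk; rewrite /triv.
by case: (size (d k)) => [|[|n]].
Qed.

Definition wp k : yterm K m := fun l => (c k)^-1 *: L k l.
Definition mu k : yterm K m := fun l => if triv k then zeta k * wp k l else wp k l.
Definition tau (k : 'I_m) (i : nat) : xyterm K m m :=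
  (fun l => if triv l then 0 else ('X^i * R k l) %% xi l,
   fun j => \sum_l (if triv l then 'X^i * R k l * wp l j
                    else (('X^i * R k l) %/ xi l) * mu l j)).

Lemma DRi : D *m invmx R = L *m Amx.
Proof. by rewrite hD mulmxK. Qed.

Lemma LiD : invmx L *m D = Amx *m R.
Proof. by rewrite hD -!mulmxA mulKmx. Qed.

Section Model.
Variables (V : lmodType K) (th : {linear V -> V}).

Definition sys' (x' y : 'I_m -> V) :=
  forall k, peval th (xi k) (x' k) = eval_y th (mu k) y.
Definition xpp (x' y : 'I_m -> V) k := if triv k then eval_y th (wp k) y else x' k.

Lemma eval_yM p (s : yterm K m) y :
  eval_y th (fun l => p * s l) y = peval th p (eval_y th s y).
Proof. by rewrite /eval_y pevalv_sum; apply: eq_bigr => l _; rewrite pevalM. Qed.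

Lemma eval_yZ a (s : yterm K m) y :
  eval_y th (fun l => a *: s l) y = a *: eval_y th s y.
Proof. by rewrite /eval_y scaler_sumr; apply: eq_bigr => l _; rewrite pevalZ. Qed.

Lemma wp_act k y : eval_y th (wp k) y = (c k)^-1 *: act th L y k.
Proof. by rewrite /wp eval_yZ. Qed.

Lemma mu_triv k y : triv k -> eval_y th (mu k) y = peval th (zeta k) (eval_y th (wp k) y).
Proof. by move=> tk; rewrite /mu tk eval_yM. Qed.

Lemma mu_ntriv k y : ~~ triv k -> eval_y th (mu k) y = eval_y th (wp k) y.
Proof. by move=> /negPf tk; rewrite /mu tk. Qed.

Lemma KEY x' y : sys' x' y -> forall k i,
  eval_xy th (tau k i) x' y = iter i th (act th R (xpp x' y) k).
Proof.
move=> s' k i; rewrite /eval_xy /act /eval_y /= -peval_Xn pevalv_sum.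
under [X in _ + X = _]eq_bigr => j _ do rewrite peval_sum.
rewrite exchange_big /= -big_split /=; apply: eq_bigr => l _.
rewrite -pevalM /xpp; case: ifP => tl.
  rewrite peval0 add0r.
  by have := eval_yM ('X^i * R k l) (wp l) y; rewrite /eval_y => ->.
have := eval_yM (('X^i * R k l) %/ xi l) (mu l) y; rewrite /eval_y => ->.
rewrite -/(eval_y th (mu l) y) -s' -pevalM addrC -pevalD.
by rewrite -divp_eq.
Qed.

Lemma main_i (x y : 'I_m -> V) :
  (forall k, act th Amx x k = y k) <->
  exists x', sys' x' y /\ forall k, x k = eval_xy th (tau k 0) x' y.
Proof.
split => [h | [x' [s' hx]]].
  have star : forall k, peval th (d k) (act th (invmx R) x k) = act th L y k.
    move=> k; rewrite /d -act_diag // -act_mul DRi act_mul.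
    exact: act_ext.
  pose x' k := if triv k then eval_y th (wp k) y else act th (invmx R) x k.
  have xe : forall k, xpp x' y k = act th (invmx R) x k.
    move=> k; rewrite /xpp /x'; have [tk|tk] := boolP (triv k); last by [].
    by rewrite wp_act -star dC // pevalC scalerA mulVf ?c_neq0 ?scale1r.
  have s' : sys' x' y.
    move=> k; rewrite /x'; have [tk|tk] := boolP (triv k).
      by rewrite mu_triv // /xi tk.
    rewrite mu_ntriv // wp_act -star d_xi // pevalZ scalerA.
    by rewrite mulVf ?c_neq0 ?scale1r.
  exists x'; split => // k; rewrite KEY //=.
  by rewrite (act_ext _ _ xe) -act_mul mulmxV // act1.
have hx' : forall k, x k = act th R (xpp x' y) k by move=> k; rewrite hx KEY.
have hDx : forall k, act th D (xpp x' y) k = act th L y k.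
  move=> k; rewrite act_diag // -/(d k) /xpp; have [tk|tk] := boolP (triv k).
    by rewrite dC // pevalC wp_act scalerA mulfV ?c_neq0 ?scale1r.
  rewrite d_xi // pevalZ s' mu_ntriv // wp_act scalerA.
  by rewrite mulfV ?c_neq0 ?scale1r.
move=> k; rewrite (act_ext _ _ hx') -act_mul -LiD act_mul (act_ext _ _ hDx).
by rewrite -act_mul mulVmx // act1.
Qed.

Lemma main_ii x' y : sys' x' y -> forall k i,
  eval_xy th (tau k i) x' y = iter i th (eval_xy th (tau k 0) x' y).
Proof. by move=> s' k i; rewrite !KEY. Qed.

End Model.

Lemma xi_neq0 k : xi k != 0.
Proof. by apply: monic_neq0; case: (xi_ok k). Qed.

Lemma b2 k i l j : (pdeg (xi k) <= i)%N -> ((tau l j).1 k)`_i = 0.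
Proof.
rewrite /tau /=; case: ifP => tk hi; first by rewrite coef0.
apply: nth_default; have := ltn_modpN0 ('X^j * R l k) (xi_neq0 k).
move: hi; rewrite /pdeg; case: (size (xi k)) => [|a] //= hi.
by rewrite ltnS => h; apply: leq_trans h hi.
Qed.

Lemma modp_sum (I : Type) (r : seq I) (P : pred I) (F : I -> {poly K}) p :
  (\sum_(i <- r | P i) F i) %% p = \sum_(i <- r | P i) (F i %% p).
Proof.
elim/big_rec2: _ => [|i a b _ <-]; first exact: mod0p.
by rewrite modpD.
Qed.

Lemma tri (r : 'I_m -> {poly K}) :
  (forall l, (size (\sum_j r j * Amx j l)%R <= pdeg (zeta l))%N) -> forall l, r l = 0.
Proof.
move=> H.
suff H' : forall n (l : 'I_m), (m - n <= l)%N -> r l = 0.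
  by move=> l; apply: (H' m); rewrite subnn.
elim => [|n IH] l hl.
  by move: hl; rewrite subn0 leqNgt ltn_ord.
have [hl'|hl'] := leqP (m - n) l; first exact: IH.
have se : \sum_j r j * Amx j l = r l * zeta l.
  rewrite (bigD1 l) //= mxE eqxx big1 ?addr0 // => j jl.
  rewrite mxE eq_sym (negPf jl); case: ifP => lj; last by rewrite mulr0.
  by rewrite IH ?mul0r //; move: lj; lia.
have := H l; rewrite se; apply: contraTeq => rl.
have z0 : zeta l != 0 by apply: monic_neq0; case: (Hzeta l).
rewrite -ltnNge size_mul // /pdeg.
have : (0 < size (r l))%N by rewrite size_poly_gt0.
have : (0 < size (zeta l))%N by rewrite size_poly_gt0.
move: (size (zeta l)) (size (r l)) => a b; case: a => // a; case: b => // b _ _.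
by rewrite addSn /= addnS ltnS leq_addl.
Qed.

Lemma b1 (cc : 'I_m -> nat -> K) :
  (forall l, \sum_(k < m) \sum_(i < pdeg (zeta k)) cc k i *: (tau k i).1 l = 0) ->
  forall k i, (i < pdeg (zeta k))%N -> cc k i = 0.
Proof.
move=> H.
pose pk k := \poly_(i < pdeg (zeta k)) cc k i.
pose s l := \sum_k pk k * R k l.
have hs : forall l, d l %| s l.
  move=> l; have [tl|tl] := boolP (triv l).
    by rewrite dC // -alg_polyC dvdpZl ?c_neq0 // dvd1p.
  rewrite d_xi // dvdpZl ?c_neq0 //; apply/modp_eq0P.
  have := H l; rewrite /tau /= (negPf tl) => <-.
  rewrite modp_sum; apply: eq_bigr => k _.
  rewrite /pk poly_def mulr_suml modp_sum; apply: eq_bigr => i _.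
  by rewrite -scalerAl modpZl.
pose pr : 'rV[{poly K}]_m := \row_k pk k.
pose er : 'rV[{poly K}]_m := \row_l (s l %/ d l).
have h1 : pr *m R = er *m D.
  apply/rowP => l; rewrite !mxE [RHS](bigD1 l) //= [X in _ = _ + X]big1 ?addr0.
    rewrite !mxE -/(d l) divpK //; apply: eq_bigr => k _; rewrite mxE //.
  by move=> j jl; rewrite Ddiag ?mulr0.
have h2 : pr = (er *m L) *m Amx.
  by rewrite -(mulmxK uR pr) h1 -[er *m D *m _]mulmxA DRi mulmxA.
have r0 : forall j, (er *m L) 0 j = 0.
  apply: (tri (r := fun j => (er *m L) 0 j)) => l.
  have e := congr1 (fun N0 : 'rV[{poly K}]_m => N0 0 l) h2.
  rewrite /= [X in _ = X]mxE in e; rewrite -e mxE; exact: size_poly.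
have p0 : forall k, pk k = 0.
  move=> k; have e := congr1 (fun N0 : 'rV[{poly K}]_m => N0 0 k) h2.
  rewrite /= [X in _ = X]mxE mxE in e; rewrite e.
  by rewrite big1 // => j _; rewrite r0 mul0r.
move=> k i ik; have := congr1 (fun p : {poly K} => p`_i) (p0 k).
by rewrite coef_poly ik coef0.
Qed.

Lemma var1 (P : {poly K} -> Prop) :
  (forall k f, mirr f -> f %| zeta k -> P f) ->
  forall k f, mirr f -> f %| xi k -> P f.
Proof.
move=> H k f mf fx; have [tk|tk] := boolP (triv k).
  by apply: (H k); move: fx; rewrite /xi tk.
have fd : f %| d k by rewrite d_xi // dvdpZr ?c_neq0.
have irr := mf.2.
have : f %| \prod_j d j by rewrite (bigD1 k) //= dvdp_mulr.
rewrite prod_d => /(irr_dvd_mul irr) [/(irr_dvd_mul irr) [h|h]|h].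
- have uL' : \det L \is a GRing.unit by rewrite -unitmxE.
  by have := irr_ndvd_unit irr uL'; rewrite h.
- by have [j hj] := irr_dvd_prod irr h; apply: (H j).
- have uR' : \det R \is a GRing.unit by rewrite -unitmxE.
  by have := irr_ndvd_unit irr uR'; rewrite h.
Qed.

Lemma TA_eq (T : M) (g : {poly K}) :
  (forall x y : 'I_m -> {poly K}, (forall k, act ('X \o* idfun) Amx x k = y k) ->
     forall k, peval ('X \o* idfun) g (x k) = act ('X \o* idfun) T y k) ->
  T *m Amx = g%:M.
Proof.
move=> H; apply/matrixP => k j.
pose x i : {poly K} := (i == j)%:R.
have := H x (act ('X \o* idfun) Amx x) (fun _ => erefl) k.
rewrite peval_polyX /act /eval_y.
have inner : forall l, \sum_i peval ('X \o* idfun) (Amx l i) (x i) = Amx l j.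
  move=> l; rewrite (bigD1 j) //= big1 ?addr0.
    by rewrite peval_polyX /x eqxx mul1r.
  by move=> i ij; rewrite peval_polyX /x (negPf ij) mul0r.
under eq_bigr => l _ do rewrite inner peval_polyX.
rewrite !mxE /x mulr_natl.
move=> ->.
by apply: eq_bigr => l _; rewrite mulrC.
Qed.

Lemma var2 (f : {poly K}) (N : nat) (q : 'I_m -> nat) (t : 'I_m -> yterm K m) :
  mirr f -> (forall k, zeta k = f ^+ q k /\ (0 < q k <= N)%N) ->
  (forall (V : lmodType K) (th : {linear V -> V}) (x y : 'I_m -> V),
     (forall k, act th Amx x k = y k) ->
     forall k, peval th (f ^+ N) (x k) = eval_y th (t k) y) ->
  exists q' : 'I_m -> nat,
    (forall k, xi k = f ^+ q' k /\ (0 < q' k <= N)%N) /\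
    forall (V : lmodType K) (th : {linear V -> V}) (u : 'I_m -> V),
      (forall k, peval th (f ^+ N) (u k) = 0) ->
      (forall k, eval_y th (t k) u = 0) ->
      forall k : 'I_m, peval th (f ^+ (N - q' k)) (eval_y th (mu k) u) = 0.
Proof.
move=> [mf irr] hz H.
pose T : M := \matrix_(k, l) t k l.
have actT : forall (V : lmodType K) (th : {linear V -> V}) (y : 'I_m -> V) k,
    act th T y k = eval_y th (t k) y.
  by move=> V th y k; rewrite /act /eval_y; apply: eq_bigr => l _; rewrite mxE.
have TA : T *m Amx = (f ^+ N)%:M.
  by apply: TA_eq => x y hxy k; rewrite actT; apply: H.
pose E := invmx R *m T *m invmx L.
have ED : E *m D = (f ^+ N)%:M.
  rewrite /E -mulmxA LiD mulmxA -(mulmxA _ T) TA scalar_mxC -mulmxA.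
  by rewrite mulVmx // mulmx1.
have hE : forall j k, E j k * d k = f ^+ N *+ (j == k).
  move=> j k; have := congr1 (fun N0 : M => N0 j k) ED.
  rewrite /= [X in X = _]mxE (bigD1 k) //= big1 ?addr0.
    by rewrite [(f ^+ N)%:M j k]mxE => h; exact: h.
  by move=> i ik; rewrite Ddiag ?mulr0.
have Eoff : forall j k, j != k -> E j k = 0.
  move=> j k jk; have := hE j k; rewrite (negPf jk) mulr0n => /eqP.
  by rewrite mulf_eq0 (negPf (d_neq0 k)) orbF => /eqP.
have key : forall k, exists e, (xi k = f ^+ e /\ (0 < e <= N)%N) /\
    forall (V : lmodType K) (th : {linear V -> V}) (u : 'I_m -> V),
      (forall k, peval th (f ^+ N) (u k) = 0) ->
      (forall k, eval_y th (t k) u = 0) ->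
      peval th (f ^+ (N - e)) (eval_y th (mu k) u) = 0.
  move=> k; have [tk|tk] := boolP (triv k).
    have [zq /andP [q0 qN]] := hz k.
    exists (q k); split; first by rewrite /xi tk zq q0 qN.
    move=> V th u hu ht; rewrite mu_triv // zq -pevalM -exprD subnK //.
    rewrite /eval_y pevalv_sum big1 // => l _.
    by rewrite -pevalM mulrC pevalM hu pevalv0.
  have dvd : xi k %| f ^+ N.
    have := hE k k; rewrite eqxx mulr1n => e.
    by rewrite -(dvdpZl _ _ (c_neq0 k)) -d_xi // -e dvdp_mull.
  have [e eN xe] := monic_dvd_pow irr mf (xi_ok k).1 dvd.
  exists e; split.
    split => //; rewrite eN andbT lt0n; apply/eqP => e0.
    by have := (xi_ok k).2; rewrite xe e0 expr0 /pdeg size_poly1.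
  move=> V th u hu ht.
  have ce : c k *: E k k = f ^+ (N - e).
    apply: (@mulIf _ (f ^+ e)); first by rewrite expf_neq0 // irredp_neq0.
    rewrite /= -exprD subnK // -scalerAl.
    by have := hE k k; rewrite eqxx mulr1n d_xi // xe -scalerAr.
  rewrite mu_ntriv // wp_act -ce pevalZ pevalvZ scalerA mulfV ?c_neq0 // scale1r.
  rewrite -(act_diag _ _ Eoff) -act_mul /E.
  rewrite -[_ *m invmx L *m L]mulmxA mulVmx // mulmx1 act_mul.
  have h0 : act th T u =1 (fun _ => 0) by move=> l; rewrite actT ht.
  by rewrite (act_ext _ _ h0) act0.
have [q' hq'] := fin_all_exists key.
exists q'; split => [k|V th u hu ht k]; first exact: (hq' k).1.
exact: (hq' k).2 V th u hu ht.
Qed.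

End Main.

End Aux.
Import Aux.

Theorem lemma4p19 (K : fieldType) (m : nat)
    (zeta : 'I_m -> {poly K}) (Q : 'I_m -> 'I_m -> {poly K})
    (Hzeta : forall k, zeta k \is monic /\ (0 < pdeg (zeta k))%N)
    (HQ : forall k l : 'I_m, (l < k)%N -> (size (Q k l) < size (zeta l))%N) :
  let sys := fun (V : lmodType K) (th : {linear V -> V}) (x y : 'I_m -> V) =>
    forall k : 'I_m,
      peval th (zeta k) (x k)
      = \sum_(l < m | (l < k)%N) peval th (Q k l) (x l) + y k in
  exists (n : nat) (xi : 'I_n -> {poly K}) (mu : 'I_n -> yterm K m)
         (tau : 'I_m -> nat -> xyterm K n m),
  let sys' := fun (V : lmodType K) (th : {linear V -> V}) (x' : 'I_n -> V)
                  (y : 'I_m -> V) =>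
    forall k : 'I_n, peval th (xi k) (x' k) = eval_y th (mu k) y in
  (
   (* (a) *)
   (forall k, xi k \is monic /\ (0 < pdeg (xi k))%N) /\
   (* (b)(1) linear independence of tau^i_k(x'; 0), i < deg zeta_k *)
   (forall c : 'I_m -> nat -> K,
      (forall l : 'I_n,
         \sum_(k < m) \sum_(i < pdeg (zeta k)) c k i *: (tau k i).1 l = 0) ->
      forall (k : 'I_m) (i : nat), (i < pdeg (zeta k))%N -> c k i = 0) /\
   (* (b)(2) theta^i(x'_k), i >= deg xi_k, does not occur in tau^j_l, j < deg zeta_l *)
   (forall (k : 'I_n) (i : nat) (l : 'I_m) (j : nat),
      (pdeg (xi k) <= i)%N -> (j < pdeg (zeta l))%N -> ((tau l j).1 k)`_i = 0) /\
   (* (i) *)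
   (forall (V : lmodType K) (th : {linear V -> V}) (x y : 'I_m -> V),
      sys V th x y <->
      exists x' : 'I_n -> V,
        sys' V th x' y /\ forall k, x k = eval_xy th (tau k 0%N) x' y) /\
   (* (ii) *)
   (forall (V : lmodType K) (th : {linear V -> V}) (x' : 'I_n -> V)
           (y : 'I_m -> V),
      sys' V th x' y ->
      forall (k : 'I_m) (i : nat),
        eval_xy th (tau k i) x' y = iter i th (eval_xy th (tau k 0%N) x' y)) /\
   (* Variation 1 *)
   (forall C : kconf K, kconf_ok C ->
      (forall (k : 'I_m) f, mirr f -> f %| zeta k -> kc_c C f = None) ->
      forall (k : 'I_n) f, mirr f -> f %| xi k -> kc_c C f = None) /\
   (* Variation 2 *)
   (forall (C : kconf K) (f : {poly K}) (N : nat) (q : 'I_m -> nat)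
           (t : 'I_m -> yterm K m),
      kconf_ok C -> mirr f -> kc_c C f = Some N -> (0 < N)%N ->
      (forall k, zeta k = f ^+ q k /\ (0 < q k <= N)%N) ->
      (forall (V : lmodType K) (th : {linear V -> V}) (x y : 'I_m -> V),
         sys V th x y -> forall k, peval th (f ^+ N) (x k) = eval_y th (t k) y) ->
      exists q' : 'I_n -> nat,
        (forall k, xi k = f ^+ q' k /\ (0 < q' k <= N)%N) /\
        forall (V : lmodType K) (th : {linear V -> V}) (u : 'I_m -> V),
          (forall k, peval th (f ^+ N) (u k) = 0) ->
          (forall k, eval_y th (t k) u = 0) ->
          forall k : 'I_n, peval th (f ^+ (N - q' k)) (eval_y th (mu k) u) = 0)).

Proof.
move=> sys.
have [D [dg [L [R [uL uR hD]]]]] := diag_exists (Amx zeta Q).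
exists m, (xi zeta D), (mu zeta L D), (tau zeta L R D).
move=> sys'.
split; first exact: (xi_ok Hzeta uL uR hD dg).
split; first exact: (b1 Hzeta uL uR hD dg).
split; first by move=> k i l j hi _; apply: (b2 Hzeta uL uR hD dg).
split.
  move=> V th x y; apply: iff_trans (sys_act zeta Q th x y) _.
  exact: (main_i Hzeta uL uR hD dg).
split; first by move=> V th x' y s'; apply: main_ii.
split.
  move=> C _ H k f mf fx.
  exact: (var1 Hzeta uL uR hD dg (P := fun f => kc_c C f = None) H mf fx).
move=> C f N q t _ mf _ _ hz H.
apply: (var2 Hzeta uL uR hD dg mf hz) => V th x y hxy k.
by apply: H; apply/(sys_act zeta Q th x y).
Qed.
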